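(* Let $\ell$ be a prime and let $R,S,T$ be pairwise coprime positive integers. Let $S'=\prod_{q:\ \operatorname{ord}_q(S)\text{ odd}} q$, let $v$ be the positive integer with $SS'=v^2$, let $u=RS'$, and write $TS'=mn^2$ with $m$ a squarefree positive integer and $n$ a positive integer. Let $K=\mathbb{Q}(\sqrt{-m})$ with ring of integers $\mathcal{O}$, and let $\epsilon\in K^*$ be a representative of an element of $\mathcal{E}$. Let $q=2k\ell+1$ be a prime ($k$ a positive integer) such that $q\mathcal{O}=\mathfrak{q}_1\mathfrak{q}_2$ with $\mathfrak{q}_1\neq\mathfrak{q}_2$ and $\operatorname{ord}_{\mathfrak{q}_j}(\epsilon)=0$ for $j=1,2$. Let $\chi(\ell,q)=\{\eta^\ell:\eta\in\mathbb{F}_q\}$ and let $C(\ell,q)$ be the set of $\zeta\in\chi(\ell,q)$ such that, for each $j=1,2$, $\big((v\zeta+n\sqrt{-m})/\epsilon\big)^{2k}\equiv 0$ or $1\pmod{\mathfrak{q}_j}$ (where $\zeta$ is regarded as an element of $\mathcal{O}/\mathfrak{q}_j\cong\mathbb{F}_q$). If $C(\ell,q)=\emptyset$, then there are no $\sigma\in\mathbb{Z}$ and $\eta\in K$ satisfying \[ v\sigma^\ell+n\sqrt{-m}=\epsilon\eta^\ell . \]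
   Context: Let $\mathfrak{S}$ be the set of prime ideals of $\mathcal{O}$ dividing $u$ or $2n\sqrt{-m}$. The $\ell$-Selmer group is $K(\mathfrak{S},\ell)=\{\epsilon\in K^*/K^{*\ell}:\operatorname{ord}_{\mathfrak P}(\epsilon)\equiv 0\pmod\ell \text{ for all prime ideals }\mathfrak P\notin\mathfrak{S}\}$, and $\mathcal{E}=\{\epsilon\in K(\mathfrak{S},\ell): \operatorname{Norm}(\epsilon)/u\in\mathbb{Q}^{*\ell}\}$. *)

(* Defs.v *)
(* K = Q(sqrt(-m)) is modelled inside the algebraic complex numbers algC. *)
From HB Require Import structures.
From mathcomp Require Import all_boot all_order all_algebra all_field.
Set Implicit Arguments. Unset Strict Implicit. Unset Printing Implicit Defensive.
Import Order.TTheory GRing.Theory Num.Theory.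
Local Open Scope ring_scope.

Definition sqm (m : nat) : algC := sqrtC (- (m%:R)).

Definition inK (m : nat) (x : algC) : Prop :=
  exists a b : rat, x = ratr a + ratr b * sqm m.

Definition inO (m : nat) (x : algC) : Prop := inK m x /\ x \in Aint.

Definition prime_ideal (m : nat) (P : algC -> Prop) : Prop :=
  [/\ (forall x, P x -> inO m x),
      P 0,
      (forall x y, P x -> P y -> P (x + y)),
      (forall a x, inO m a -> P x -> P (a * x))
    & [/\ ~ P 1,
      (forall x y, inO m x -> inO m y -> P (x * y) -> P x \/ P y)
    & exists x, P x /\ x <> 0]].

Definition idealMul (I J : algC -> Prop) (z : algC) : Prop :=
  exists s : seq (algC * algC),
    (forall p, p \in s -> I p.1 /\ J p.2) /\ z = \sum_(p <- s) (p.1 * p.2).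

Fixpoint idealPow (m : nat) (P : algC -> Prop) (f : nat) : algC -> Prop :=
  match f with
  | 0 => inO m
  | f'.+1 => idealMul (idealPow m P f') P
  end.

Definition principal (m : nat) (c : algC) (z : algC) : Prop :=
  exists y, inO m y /\ z = c * y.

Definition ordO (m : nat) (P : algC -> Prop) (a : algC) (f : nat) : Prop :=
  idealPow m P f a /\ ~ idealPow m P f.+1 a.

Definition ordK (m : nat) (P : algC -> Prop) (x : algC) (e : int) : Prop :=
  exists a d : algC, [/\ inO m a, inO m d, a <> 0, d <> 0 & x = a / d] /\
    exists f g : nat, [/\ ordO m P a f, ordO m P d g & e = f%:Z - g%:Z].

(* congruence mod P of P-integral elements: x - y lies in the maximal
   ideal of the localization O_P *)
Definition congP (m : nat) (P : algC -> Prop) (x y : algC) : Prop :=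
  exists a d : algC, [/\ P a, inO m d, ~ P d & x - y = a / d].

Definition squarefree (m : nat) : Prop := forall p, prime p -> ~~ (p * p %| m)%N.

Definition Sprime (S : nat) : nat := (\prod_(p <- primes S | odd (logn p S)) p)%N.

Definition inSset (m n u : nat) (P : algC -> Prop) : Prop :=
  P (u%:R) \/ P (2%:R * n%:R * sqm m).

Definition in_Selmer (l m n u : nat) (eps : algC) : Prop :=
  [/\ inK m eps, eps <> 0 &
    forall P, prime_ideal m P -> ~ inSset m n u P ->
      exists e : int, ordK m P eps e /\ (l%:Z %| e)%Z].

Definition in_E (l m n u : nat) (eps : algC) : Prop :=
  in_Selmer l m n u eps /\
  exists r : rat, r != 0 /\ (eps * eps^*) / u%:R = (ratr r) ^+ l.

(* the condition defining C(l,q) at the prime ideal P, for zeta in F_q *)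
Definition condC (m n v k : nat) (eps : algC) (P : algC -> Prop) (z : nat) : Prop :=
  let x := ((v%:R * z%:R + n%:R * sqm m) / eps) ^+ (2 * k) in
  congP m P x 0 \/ congP m P x 1.

(* Main.v *)
Require Import Defs.
From HB Require Import structures.
From mathcomp Require Import all_boot all_order all_algebra all_field.
From mathcomp Require Import ring.
From Stdlib Require Import Classical FunctionalExtensionality PropExtensionality.
From mathcomp Require Import zify.
Import Order.TTheory GRing.Theory Num.Theory.
Set Implicit Arguments. Unset Strict Implicit.
Local Open Scope ring_scope.

Section K.
Variable m : nat.
Local Notation s := (sqm m).

Lemma sqm2 : s * s = - m%:R.
Proof. by rewrite -expr2 /sqm sqrtCK. Qed.

Lemma inK_rat r : inK m (ratr r).
Proof. by exists r, 0; rewrite rmorph0 mul0r addr0. Qed.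

Lemma inK_int (z : int) : inK m z%:~R.
Proof. by rewrite -ratr_int; apply: inK_rat. Qed.

Lemma inK_s : inK m s.
Proof. by exists 0, 1; rewrite rmorph0 rmorph1 add0r mul1r. Qed.

Lemma inK_add x y : inK m x -> inK m y -> inK m (x + y).
Proof.
case=> [a [b ->]] [c [d ->]]; exists (a + c), (b + d).
rewrite !rmorphD /=; ring.
Qed.

Lemma inK_opp x : inK m x -> inK m (- x).
Proof.
case=> [a [b ->]]; exists (- a), (- b); rewrite !rmorphN /=; ring.
Qed.

Lemma inK_mul x y : inK m x -> inK m y -> inK m (x * y).
Proof.
case=> [a [b ->]] [c [d ->]]; exists (a * c - m%:R * b * d), (a * d + b * c).
rewrite !(rmorphD, rmorphN, rmorphM) /= rmorph_nat.
apply/eqP; rewrite -subr_eq0; apply/eqP.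
transitivity (ratr b * ratr d * (s * s + m%:R)); first ring.
by rewrite sqm2 addNr mulr0.
Qed.
End K.

Section Fq.
Variable q : nat.
Hypothesis pq : prime q.

Lemma Fq0 (c : int) : ((c%:~R : 'F_q) == 0) = (q%:Z %| c)%Z.
Proof.
rewrite dvdzE /=; case: c => [n|n].
  by rewrite /= -(inj_eq val_inj) /= val_Fp_nat.
by rewrite NegzE mulrNz oppr_eq0 /= -(inj_eq val_inj) /= val_Fp_nat.
Qed.

Lemma Fq_inv (c : int) : ~~ (q%:Z %| c)%Z -> exists h t : int, h * c - 1 = t * q%:Z.
Proof.
rewrite -Fq0 => nz.
exists ((val ((c%:~R : 'F_q)^-1)))%:Z.
have : (q%:Z %| (val ((c%:~R : 'F_q)^-1))%:Z * c - 1)%Z.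
  rewrite -Fq0 rmorphB rmorphM /= rmorph1 -[X in _ * X]/(c%:~R : 'F_q).
  have -> : ((val ((c%:~R : 'F_q)^-1))%:Z%:~R : 'F_q) = (c%:~R : 'F_q)^-1.
    by rewrite -pmulrn natr_Zp.
  by rewrite mulVf // subrr.
by case/dvdzP=> t ->; exists t.
Qed.

Lemma Fq_fermat (c : int) : ~~ (q%:Z %| c)%Z -> (q%:Z %| c ^+ q.-1 - 1)%Z.
Proof.
rewrite -!Fq0 rmorphB rmorphXn rmorph1 /= => nz.
have := expf_card ((c%:~R : 'F_q)) ; rewrite card_Fp //.
case: q pq nz => // q' _ nz; rewrite /= exprS -[X in _ = X]mulr1 => /(mulfI nz) ->.
by rewrite subrr.
Qed.
End Fq.

Lemma den_ok (q m : nat) (c : rat) : prime q -> squarefree m ->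
  c * c * m%:R \in Num.int -> ~~ (q %| `|denq c|)%N.
Proof.
move=> pq sqf /intrP [z hz].
have e : m%:Z * numq c * numq c = z * denq c * denq c.
  apply: (@intr_inj rat); rewrite !rmorphM /= !numqE -hz /=.
  rewrite -[(m%:Z)%:~R]/(m%:R : rat); ring.
apply/negP => qd.
have : (q * q %| m * (`|numq c| * `|numq c|))%N.
  have: (`|(m%:Z * numq c * numq c)%R| = `|(z * denq c * denq c)%R|)%N by rewrite e.
  rewrite !abszM /= mulnA => ->; rewrite -mulnA; apply: dvdn_mull.
  exact: dvdn_mul.
have cq : coprime q `|numq c|.
  rewrite prime_coprime //; apply/negP => qn.
  have := coprime_num_den c; move/(coprime_dvdl qn)/(coprime_dvdr qd).
  by rewrite /coprime gcdnn => /eqP q1; rewrite q1 in pq.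
rewrite Gauss_dvdl; first by apply/negP; apply: sqf.
by rewrite coprimeMl coprimeMr cq.
Qed.

Lemma conj_sqm (m : nat) : (0 < m)%N -> (sqm m)^* = - sqm m.
Proof.
move=> hm.
have h : ((sqm m)^*) ^+ 2 == (sqm m) ^+ 2.
  by rewrite -rmorphXn /sqm sqrtCK rmorphN /= conjC_nat.
rewrite eqf_sqr in h; case/orP: h => /eqP // h.
have : `|sqm m| ^+ 2 = - m%:R by rewrite normCK h -expr2 /sqm sqrtCK.
move=> e; have : 0 <= `|sqm m| ^+ 2 by rewrite exprn_ge0.
rewrite e oppr_ge0 => h2; exfalso; move: h2; rewrite lern0 => /eqP m0; by rewrite m0 in hm.
Qed.

Lemma conj_rat (a : rat) : (ratr a : algC)^* = ratr a.
Proof. by rewrite conj_Crat // Crat_rat. Qed.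

Lemma coordO (q m : nat) (x : algC) : prime q -> (2 < q)%N -> squarefree m -> (0 < m)%N ->
  inO m x -> exists D A B : int, ~~ (q%:Z %| D)%Z /\ D%:~R * x = A%:~R + B%:~R * sqm m.
Proof.
move=> pq q2 sqf hm [[a [b ex]] Ax].
have xc : x^* = ratr a - ratr b * sqm m.
  rewrite ex rmorphD [X in _ + X]rmorphM.
  change ((ratr a)^* + (ratr b)^* * (sqm m)^* = ratr a - ratr b * sqm m).
  rewrite !conj_rat.
  by rewrite conj_sqm // mulrN.
have Axc : x^* \in Aint by rewrite Aint_aut.
have A0 : (2 * a) \in Num.int.
  rewrite -Cint_rat; apply: Cint_rat_Aint; first exact: Crat_rat.
  have -> : ratr (2 * a) = x + x^* :> algC.
    by rewrite xc ex rmorphM /= rmorph_nat; ring.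
  exact: rpredD.
have B0 : (2 * b) * (2 * b) * m%:R \in Num.int.
  rewrite -Cint_rat; apply: Cint_rat_Aint; first exact: Crat_rat.
  have -> : ratr (2 * b * (2 * b) * m%:R) = - (x - x^*) ^+ 2 :> algC.
    rewrite xc ex !rmorphM /= !rmorph_nat.
    apply/eqP; rewrite -subr_eq0; apply/eqP.
    transitivity (4%:R * ratr b * ratr b * (sqm m * sqm m + m%:R)); first ring.
    by rewrite sqm2 addNr mulr0.
  by rewrite rpredN rpredX // rpredB.
have dq := den_ok pq sqf B0.
case/intrP: A0 => A0 hA0.
set c := 2 * b in dq B0 *.
exists (2 * denq c), (denq c * A0), (numq c); split.
  rewrite dvdzE abszM /= Euclid_dvdM // negb_or dq andbT.
  apply/negP => /dvdn_leq h; have := h isT; rewrite leqNgt => /negP; apply; exact: q2.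
have hn : ((numq c)%:~R : algC) = ratr c * (denq c)%:~R.
  by have := congr1 (@ratr algC) (numqE c); rewrite ratr_int rmorphM /= ratr_int.
have ha : (A0%:~R : algC) = 2%:R * ratr a.
  by rewrite -ratr_int -hA0 rmorphM /= rmorph_nat.
have hb : ratr (2 * b) = 2 * ratr b :> algC by rewrite rmorphM /= rmorph_nat.
rewrite hn ex !intrM ha /c hb; ring.
Qed.

Lemma coordK (m : nat) (x : algC) : inK m x ->
  exists D A B : int, D != 0 /\ D%:~R * x = A%:~R + B%:~R * sqm m.
Proof.
case=> [a [b ->]].
exists (denq a * denq b), (numq a * denq b), (numq b * denq a); split.
  by rewrite mulf_neq0 // gt_eqF // denq_gt0.
have ha : ((numq a)%:~R : algC) = ratr a * (denq a)%:~R.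
  by have := congr1 (@ratr algC) (numqE a); rewrite ratr_int rmorphM /= ratr_int.
have hb : ((numq b)%:~R : algC) = ratr b * (denq b)%:~R.
  by have := congr1 (@ratr algC) (numqE b); rewrite ratr_int rmorphM /= ratr_int.
rewrite !intrM ha hb; ring.
Qed.

Section O.
Variable m : nat.
Local Notation s := (sqm m).

Lemma Aint_s : s \in Aint.
Proof.
apply: (@root_monic_Aint ('X^2 + (m%:R)%:P)).
- by rewrite /root !hornerE /sqm sqrtCK addNr.
- by rewrite monicXnaddC.
- apply/polyOverP => i; rewrite coefD coefXn coefC -mulrb.
  by apply: rpredD; [exact: rpred_nat | apply: rpredMn; exact: rpred_nat].
Qed.

Lemma inO_add x y : inO m x -> inO m y -> inO m (x + y).
Proof. by case=> [? ?] [? ?]; split; [apply: inK_add | apply: rpredD]. Qed.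
Lemma inO_opp x : inO m x -> inO m (- x).
Proof. by case=> [? ?]; split; [apply: inK_opp | rewrite rpredN]. Qed.
Lemma inO_sub x y : inO m x -> inO m y -> inO m (x - y).
Proof. by move=> hx hy; apply: inO_add hx (inO_opp hy). Qed.
Lemma inO_mul x y : inO m x -> inO m y -> inO m (x * y).
Proof. by case=> [? ?] [? ?]; split; [apply: inK_mul | apply: rpredM]. Qed.
Lemma inO_int (z : int) : inO m z%:~R.
Proof. by split; [apply: inK_int | apply: Aint_int]. Qed.
Lemma inO_nat (z : nat) : inO m z%:R.
Proof. by have := inO_int z. Qed.
Lemma inO_s : inO m s.
Proof. by split; [apply: inK_s | apply: Aint_s]. Qed.
Lemma inO_exp x n : inO m x -> inO m (x ^+ n).
Proof.
move=> hx; elim: n => [|n IH]; first by rewrite expr0; exact: (inO_nat 1).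
by rewrite exprS; apply: inO_mul.
Qed.
Lemma inO_sum (T : eqType) (r : seq T) (F : T -> algC) :
  (forall t, t \in r -> inO m (F t)) -> inO m (\sum_(t <- r) F t).
Proof.
elim: r => [|t r IH] h; first by rewrite big_nil; exact: (inO_nat 0).
rewrite big_cons; apply: inO_add; first by apply: h; rewrite mem_head.
by apply: IH => u hu; apply: h; rewrite in_cons hu orbT.
Qed.
End O.

Section Ideal.
Variables (m : nat) (P : algC -> Prop).
Hypothesis hP : prime_ideal m P.

Lemma P_O x : P x -> inO m x. Proof. by case: hP => h *; apply: h. Qed.
Lemma P_0 : P 0. Proof. by case: hP. Qed.
Lemma P_add x y : P x -> P y -> P (x + y). Proof. by case: hP => _ _ h *; apply: h. Qed.
Lemma P_mulO a x : inO m a -> P x -> P (a * x). Proof. by case: hP => _ _ _ h *; apply: h. Qed.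
Lemma P_mulOr a x : inO m a -> P x -> P (x * a).
Proof. by rewrite mulrC; apply: P_mulO. Qed.
Lemma P_not1 : ~ P 1. Proof. by case: hP => _ _ _ _ []. Qed.
Lemma P_prime x y : inO m x -> inO m y -> P (x * y) -> P x \/ P y.
Proof. by case: hP => _ _ _ _ [_ h _]; apply: h. Qed.
Lemma P_opp x : P x -> P (- x).
Proof. by move=> hx; rewrite -mulN1r; apply: P_mulO => //; exact: (inO_int _ (-1)). Qed.
Lemma P_sub x y : P x -> P y -> P (x - y).
Proof. by move=> hx hy; apply: P_add => //; apply: P_opp. Qed.
Lemma P_exp_prime x n : inO m x -> P (x ^+ n) -> P x.
Proof.
move=> hx; elim: n => [|n IH]; first by rewrite expr0 => /P_not1.
rewrite exprS => h; case: (P_prime hx (@inO_exp m x n hx) h) => //; exact: IH.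
Qed.
Lemma P_notmul x y : inO m x -> inO m y -> ~ P x -> ~ P y -> ~ P (x * y).
Proof. by move=> hx hy nx ny /P_prime []. Qed.
Lemma P_cong_exp x y n : inO m x -> inO m y -> P (x - y) -> P (x ^+ n - y ^+ n).
Proof.
move=> hx hy hxy; elim: n => [|n IH]; first by rewrite !expr0 subrr; exact: P_0.
have -> : x ^+ n.+1 - y ^+ n.+1 = x * (x ^+ n - y ^+ n) + y ^+ n * (x - y).
  by rewrite !exprS; ring.
by apply: P_add; apply: P_mulO => //; exact: inO_exp.
Qed.

Lemma Pow_O f x : idealPow m P f x -> inO m x.
Proof.
elim: f x => [//|f IH] x /= [sq [hs ->]].
apply: inO_sum => t /hs [h1 h2]; apply: inO_mul; [exact: IH | exact: P_O].
Qed.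

Lemma Pow_mulO f a x : inO m a -> idealPow m P f x -> idealPow m P f (a * x).
Proof.
case: f => [|f] ha /=; first by apply: inO_mul.
case=> sq [hs ->]; exists (map (fun p => (p.1, a * p.2)) sq); split.
  move=> p /mapP [p' hp' ->] /=; have [h1 h2] := hs _ hp'; split => //.
  exact: P_mulO.
rewrite big_map mulr_sumr; apply: eq_bigr => p _ /=; ring.
Qed.

Lemma Pow_add f x y : idealPow m P f x -> idealPow m P f y -> idealPow m P f (x + y).
Proof.
case: f => [|f] /=; first by apply: inO_add.
case=> s1 [h1 ->] [s2 [h2 ->]]; exists (s1 ++ s2); split; last by rewrite big_cat.
by move=> p; rewrite mem_cat => /orP [] ?; [apply: h1 | apply: h2].
Qed.

Lemma Pow_sub f x y : idealPow m P f x -> idealPow m P f y -> idealPow m P f (x - y).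
Proof.
move=> hx hy; apply: Pow_add => //; rewrite -mulN1r; apply: Pow_mulO => //.
exact: (inO_int _ (-1)).
Qed.

Lemma Pow_step f x p : idealPow m P f x -> P p -> idealPow m P f.+1 (x * p).
Proof.
move=> hx hp; exists [:: (x, p)]; split; last by rewrite big_cons big_nil addr0.
by move=> p'; rewrite inE => /eqP -> /=.
Qed.

Lemma Pow_exp f x : P x -> idealPow m P f (x ^+ f).
Proof.
move=> hx; elim: f => [|f IH]; first by rewrite expr0; exact: (inO_nat _ 1).
by rewrite exprSr; apply: Pow_step.
Qed.
End Ideal.

Section Prime.
Variables (m q : nat) (P : algC -> Prop).
Hypotheses (pq : prime q) (q2 : (2 < q)%N) (sqf : squarefree m) (hm : (0 < m)%N).
Hypotheses (hP : prime_ideal m P) (qP : P q%:R).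
Local Notation s := (sqm m).

Lemma P_qmul (t : int) x : inO m x -> P (t%:~R * q%:R * x).
Proof.
move=> hx; have -> : t%:~R * q%:R * x = (t%:~R * x) * q%:R by ring.
by apply: (P_mulO hP) => //; apply: inO_mul => //; exact: inO_int.
Qed.

Lemma P_int (c : int) : P c%:~R <-> (q%:Z %| c)%Z.
Proof.
split => [hc|/dvdzP [t ->]].
  apply/negP => /negP nd; have [h [t e]] := Fq_inv pq nd.
  have : P ((h * c)%:~R - (t * q%:Z)%:~R).
    apply: (P_sub hP); first by rewrite intrM; apply: (P_mulO hP) => //; exact: inO_int.
    by rewrite intrM; apply: (P_mulO hP) => //; exact: inO_int.
  by rewrite -rmorphB /= -e opprB addrC subrK => h1; exact: (P_not1 hP) h1.
by rewrite intrM -[X in P (_ * X)]/(q%:R); apply: (P_mulO hP) => //; exact: inO_int.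
Qed.

Definition KeyP := forall x, inO m x -> exists c : int, P (x - c%:~R).

Lemma Key_from_r (r : int) : (q%:Z %| r * r + m%:Z)%Z -> KeyP.
Proof.
move=> hr.
have hsr : exists rho : int, P (s - rho%:~R).
  have : P ((s - r%:~R) * (s + r%:~R)).
    have -> : (s - r%:~R) * (s + r%:~R) = - (r * r + m%:Z)%:~R.
      rewrite rmorphD rmorphM /= -[(m%:Z)%:~R]/(m%:R : algC).
      apply/eqP; rewrite -subr_eq0; apply/eqP.
      transitivity (s * s + m%:R); first ring.
      by rewrite sqm2 addNr.
    by apply: (P_opp hP); apply/P_int.
  have h1 : inO m (s - r%:~R) by apply: inO_sub; [exact: inO_s | exact: inO_int].
  have h2 : inO m (s + r%:~R) by apply: inO_add; [exact: inO_s | exact: inO_int].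
  case/(P_prime hP h1 h2) => [h|h]; first by exists r.
  by exists (- r); rewrite rmorphN /= opprK.
case: hsr => rho hrho x hx.
have [D [A [B [nD eD]]]] := coordO pq q2 sqf hm hx.
have [h [t et]] := Fq_inv pq nD.
exists (h * (A + B * rho)).
have -> : x - (h * (A + B * rho))%:~R =
   - ((t%:~R * q%:R) * x) + (h * B)%:~R * (s - rho%:~R).
  have e2 : (t%:~R * q%:R : algC) = (h * D - 1)%:~R by rewrite et rmorphM.
  have eA : (A%:~R : algC) = D%:~R * x - B%:~R * s by rewrite eD addrK.
  have ew : ((A + B * rho)%:~R : algC) = A%:~R + B%:~R * rho%:~R by rewrite rmorphD rmorphM.
  rewrite e2 !intrD !intrM ew eA; ring.
apply: (P_add hP); first by apply: (P_opp hP); apply: P_qmul.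
by apply: (P_mulO hP) => //; exact: inO_int.
Qed.

Section WithKey.
Hypothesis key : KeyP.

Lemma P_fermat x : inO m x -> ~ P x -> P (x ^+ q.-1 - 1).
Proof.
move=> hx nx; have [c hc] := key hx.
have nc : ~~ (q%:Z %| c)%Z.
  apply/negP => /P_int hc'; apply: nx.
  by have := P_add hP hc hc'; rewrite subrK.
have := Fq_fermat pq nc; move/P_int; rewrite rmorphB rmorphXn /= rmorph1 => h1.
have h2 := P_cong_exp hP q.-1 hx (inO_int m c) hc.
by have := P_add hP h2 h1; rewrite addrA subrK.
Qed.

Lemma P_inv y : inO m y -> ~ P y -> exists y', inO m y' /\ P (y * y' - 1).
Proof.
move=> hy ny; have [c hc] := key hy.
have nc : ~~ (q%:Z %| c)%Z.
  apply/negP => /P_int hc'; apply: ny.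
  by have := P_add hP hc hc'; rewrite subrK.
have [h [t et]] := Fq_inv pq nc.
exists h%:~R; split; first exact: inO_int.
have -> : y * h%:~R - 1 = h%:~R * (y - c%:~R) + t%:~R * q%:R * 1.
  have e2 : (t%:~R * q%:R : algC) = (h * c - 1)%:~R by rewrite et rmorphM.
  rewrite e2 rmorphB rmorphM /= rmorph1; ring.
apply: (P_add hP); first by apply: (P_mulO hP) => //; exact: inO_int.
by apply: P_qmul; exact: (inO_int _ 1).
Qed.

Lemma P_max (Q : algC -> Prop) : prime_ideal m Q -> (forall x, P x -> Q x) ->
  forall x, Q x -> P x.
Proof.
move=> hQ PQ x Qx; apply: NNPP => nx.
have hx := P_O hQ Qx.
have [c hc] := key hx.
have Qc : Q c%:~R.
  have := P_sub hQ Qx (PQ _ hc); by rewrite opprB addrC subrK.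
have nc : ~~ (q%:Z %| c)%Z.
  apply/negP => /P_int hc'; apply: nx.
  by have := P_add hP hc hc'; rewrite subrK.
have [h [t et]] := Fq_inv pq nc.
apply: (P_not1 hQ).
have -> : 1 = h%:~R * c%:~R - t%:~R * q%:R :> algC.
  have e2 : (t%:~R * q%:R : algC) = (h * c - 1)%:~R by rewrite et rmorphM.
  rewrite e2 rmorphB rmorphM /= rmorph1; ring.
apply: (P_sub hQ); first by apply: (P_mulO hQ) => //; exact: inO_int.
by apply: (P_mulO hQ); [exact: inO_int | exact: PQ].
Qed.
End WithKey.

Lemma no_r_sub : ~ (exists r : int, (q%:Z %| r * r + m%:Z)%Z) ->
  forall b, P b -> exists c, inO m c /\ b = q%:R * c.
Proof.
move=> nr b hb.
have hbO := P_O hP hb.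
have [D [A [B [nD eD]]]] := coordO pq q2 sqf hm hbO.
have hN : P (A * A + m%:Z * (B * B))%:~R.
  have -> : (A * A + m%:Z * (B * B))%:~R = D%:~R * b * (A%:~R - B%:~R * s).
    rewrite eD !rmorphD !rmorphM /= -[(m%:Z)%:~R]/(m%:R : algC).
    apply/eqP; rewrite -subr_eq0; apply/eqP.
    transitivity (B%:~R * B%:~R * (s * s + m%:R)); first ring.
    by rewrite sqm2 addNr mulr0.
  by apply: (P_mulOr hP); [apply: inO_sub; [exact: inO_int | apply: inO_mul; [exact: inO_int | exact: inO_s]] | apply: (P_mulO hP) => //; exact: inO_int].
move/P_int: hN => hN.
have qB : (q%:Z %| B)%Z.
  apply/negP => /negP nB; apply: nr.
  have [h [t et]] := Fq_inv pq nB.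
  exists (A * h); rewrite -Fq0 //; move: hN; rewrite -Fq0 //.
  have eh : (h%:~R : 'F_q) * B%:~R = 1.
    have : ((h * B - 1)%:~R : 'F_q) = 0 by apply/eqP; rewrite Fq0 // et dvdz_mull.
    by rewrite rmorphB rmorphM /= rmorph1 => /eqP; rewrite subr_eq0 => /eqP.
  rewrite !rmorphD !rmorphM /= => /eqP h0; apply/eqP.
  have -> : ((A%:~R : 'F_q) * h%:~R * (A%:~R * h%:~R) + (m%:Z)%:~R) =
     (h%:~R * h%:~R) * (A%:~R * A%:~R + (m%:Z)%:~R * (B%:~R * B%:~R))
     + (m%:Z)%:~R * (1 - (h%:~R * B%:~R) * (h%:~R * B%:~R)).
    ring.
  by rewrite h0 eh mulr0 mul1r subrr mulr0 add0r.
have qA : (q%:Z %| A)%Z.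
  have : (q%:Z %| A * A)%Z.
    have h3 : (q%:Z %| m%:Z * (B * B))%Z by apply: dvdz_mull; apply: dvdz_mull.
    by rewrite -(rpredDr (A * A) h3).
  by rewrite !dvdzE abszM Euclid_dvdM // orbb.
case/dvdzP: qA => A' eA; case/dvdzP: qB => B' eB.
have [h [t et]] := Fq_inv pq nD.
exists (h%:~R * (A'%:~R + B'%:~R * s) - t%:~R * b); split.
  apply: inO_sub; last by apply: inO_mul => //; exact: inO_int.
  apply: inO_mul; first exact: inO_int.
  by apply: inO_add; [exact: inO_int | apply: inO_mul; [exact: inO_int | exact: inO_s]].
have e2 : (t%:~R * q%:R : algC) = (h * D - 1)%:~R by rewrite et rmorphM.
have e3 : q%:R * (h%:~R * (A'%:~R + B'%:~R * s)) = h%:~R * (D%:~R * b) :> algC.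
  rewrite eD eA eB !rmorphM /=; ring.
have e4 : q%:R * (t%:~R * b) = (h * D - 1)%:~R * b by rewrite -e2; ring.
rewrite mulrBr e3 e4 rmorphB rmorphM /= rmorph1; ring.
Qed.
End Prime.

Section Ytrick.
Variables (m q : nat) (P : algC -> Prop) (y : algC).
Hypotheses (pq : prime q) (hP : prime_ideal m P) (qP : P q%:R) (key : KeyP m P).
Hypotheses (HPQ : forall p, P p -> exists o, inO m o /\ p * y = q%:R * o).
Hypotheses (hyO : inO m y) (ny : ~ P y).

Lemma Pow_y f x : idealPow m P f x -> exists o, inO m o /\ x * y ^+ f = q%:R ^+ f * o.
Proof.
elim: f x => [|f IH] x /=.
  by move=> hx; exists x; rewrite !expr0 mulr1 mul1r.
case=> sq [hs ->]; elim: sq hs => [|p sq IHs] hs.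
  by exists 0; split; [exact: (inO_nat _ 0) | rewrite big_nil mul0r mulr0].
have [h1 h2] := hs p (mem_head _ _).
have [o1 [ho1 e1]] := IH _ h1.
have [o2 [ho2 e2]] := HPQ h2.
have [o3 [ho3 e3]] : exists o, inO m o /\ (\sum_(p0 <- sq) p0.1 * p0.2) * y ^+ f.+1 = q%:R ^+ f.+1 * o.
  by apply: IHs => p0 hp0; apply: hs; rewrite in_cons hp0 orbT.
exists (o1 * o2 + o3); split; first by apply: inO_add => //; apply: inO_mul.
rewrite big_cons mulrDl e3 exprS.
have -> : p.1 * p.2 * (y * y ^+ f) = (p.1 * y ^+ f) * (p.2 * y) by ring.
rewrite e1 e2 exprS; ring.
Qed.

Lemma y_nz : y != 0.
Proof. by apply/eqP => y0; apply: ny; rewrite y0; exact: (P_0 hP). Qed.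

Lemma ord_unit a f : ordO m P a f ->
  exists a', [/\ inO m a', ~ P a' & a * y ^+ f = q%:R ^+ f * a'].
Proof.
case=> ha nha; have [a' [ha' e]] := Pow_y ha.
exists a'; split => // Pa'; apply: nha.
have [y' [hy' hyy]] := P_inv pq hP qP key hyO ny.
have hyy' : inO m (y * y') by apply: inO_mul.
have hc := P_cong_exp hP f hyy' (inO_nat m 1) hyy; rewrite expr1n in hc.
have h1 : idealPow m P f.+1 (q%:R ^+ f * (a' * y' ^+ f)).
  apply: Pow_step; first exact: Pow_exp.
  by apply: (P_mulOr hP) => //; exact: inO_exp.
have h2 : idealPow m P f.+1 (a * ((y * y') ^+ f - 1)) by apply: Pow_step.
have := Pow_sub hP h1 h2.
have -> : q%:R ^+ f * (a' * y' ^+ f) = a * (y * y') ^+ f.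
  by rewrite mulrA -e exprMn mulrA.
by rewrite mulrBr mulr1 opprB addrC subrK.
Qed.

Lemma eps_unit eps : ordK m P eps 0 ->
  exists al be, [/\ inO m al, inO m be, ~ P al, ~ P be & eps = al / be].
Proof.
case=> a [d [[ha hd a0 d0 ->] [f [g [oa od e]]]]].
have fg : f = g.
  by move/eqP: e; rewrite eq_sym subr_eq0 => /eqP [].
subst g.
have [a' [ha' na' ea]] := ord_unit oa.
have [d' [hd' nd' ed]] := ord_unit od.
exists a', d'; split => //.
have d'0 : d' != 0 by apply/eqP => h; apply: nd'; rewrite h; exact: (P_0 hP).
apply/eqP; rewrite eqr_div //.
have qf : (q%:R : algC) ^+ f != 0 by rewrite expf_neq0 // pnatr_eq0 -lt0n prime_gt0.
apply/eqP; apply: (mulIf qf).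
have yf : y ^+ f != 0 by rewrite expf_neq0 // y_nz.
apply: (mulIf yf).
transitivity ((a * y ^+ f) * (d' * q%:R ^+ f)); first ring.
rewrite ea -[d' * _]mulrC -ed; first ring.
by apply/eqP.
Qed.
End Ytrick.

Section Ytrick2.
Variables (m q : nat) (P : algC -> Prop) (y : algC).
Hypotheses (pq : prime q) (hP : prime_ideal m P) (qP : P q%:R).
Hypotheses (HPQ : forall p, P p -> exists o, inO m o /\ p * y = q%:R * o).
Hypotheses (hyO : inO m y) (ny : ~ P y).
Variables (Z al be eta : algC) (l : nat).
Hypotheses (hl : (0 < l)%N) (hZ : inO m Z) (hal : inO m al) (nal : ~ P al) (hbe : inO m be)
  (eqZ : Z * be = al * eta ^+ l).

Lemma qnz : (q%:R : algC) != 0.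
Proof. by rewrite pnatr_eq0 -lt0n prime_gt0. Qed.

Lemma notP_nz u : ~ P u -> u != 0.
Proof. by move=> nu; apply/eqP => u0; apply: nu; rewrite u0; exact: (P_0 hP). Qed.

Lemma eta_rec j : forall g u, inO m g -> inO m u -> ~ P u -> eta = g / (q%:R ^+ j * u) ->
  exists e1 u2, [/\ inO m e1, inO m u2, ~ P u2 & eta = e1 / u2].
Proof.
elim: j => [|j IH] g u hg hu nu eeta.
  by exists g, u; rewrite eeta expr0 mul1r.
set w := q%:R ^+ j.+1 * u.
have eqZ' : Z * be = al * (g / w) ^+ l by rewrite eqZ eeta.
have wnz : w != 0 by rewrite mulf_neq0 ?expf_neq0 ?qnz ?notP_nz.
have hw : P w.
  rewrite /w exprS -mulrA; apply: (P_mulOr hP) => //.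
  by apply: inO_mul => //; apply: inO_exp; exact: inO_nat.
have e : al * g ^+ l = Z * be * w ^+ l.
  by rewrite eqZ' expr_div_n -mulrA divfK // expf_neq0.
have Pg : P g.
  have : P (al * g ^+ l).
    rewrite e; apply: (P_mulO hP); first by apply: inO_mul.
    by case: l hl => // l' _; rewrite exprS; apply: (P_mulOr hP) => //; apply: inO_exp; exact: (P_O hP).
  by case/(P_prime hP hal (inO_exp l hg)) => // /(P_exp_prime hP hg).
have [o [ho eo]] := HPQ Pg.
apply: (IH o (u * y)) => //; first by apply: inO_mul.
  exact: (P_notmul hP).
have ynz : y != 0 by apply: notP_nz.
have unz : u != 0 by apply: notP_nz.
rewrite eeta; apply/eqP; rewrite eqr_div //; last by rewrite !mulf_neq0 ?expf_neq0 ?qnz.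
apply/eqP; rewrite /w.
transitivity ((g * y) * q%:R ^+ j * u); first ring.
by rewrite eo exprS; ring.
Qed.

Lemma eta_int : inK m eta ->
  exists e1 u2, [/\ inO m e1, inO m u2, ~ P u2 & eta = e1 / u2].
Proof.
case/coordK => D [A [B [D0 eD]]].
have [N [sg [Npos sgv eN]]] : exists (N : nat) (sg : int),
    [/\ (0 < N)%N, (sg = 1 \/ sg = -1) & (D%:~R : algC) = sg%:~R * N%:R].
  case: D D0 eD => [n|n] D0 _.
    exists n, 1; split => //; [by rewrite lt0n; apply: contraNneq D0 => -> | by left | by rewrite mul1r].
  exists n.+1, (-1); split => //; [by right | by rewrite NegzE mulN1r rmorphN].
have [D1 cq eN1] := pfactor_coprime pq Npos.
set j := logn q N in eN1.
have hu : inO m (sg * D1%:Z)%:~R by exact: inO_int.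
have nu : ~ P (sg * D1%:Z)%:~R.
  move/(P_int pq hP qP); rewrite dvdzE abszM.
  have -> : `|sg|%N = 1%N by case: sgv => ->.
  by rewrite mul1n /= => h; move: cq; rewrite prime_coprime // h.
apply: (@eta_rec j (A%:~R + B%:~R * sqm m) _ _ hu nu).
  by apply: inO_add; [exact: inO_int | apply: inO_mul; [exact: inO_int | exact: inO_s]].
have Dnz : (D%:~R : algC) != 0 by rewrite intr_eq0.
rewrite -eD mulrC.
have -> : q%:R ^+ j * (sg * D1%:Z)%:~R = (D%:~R : algC).
  by rewrite eN eN1 natrM natrX rmorphM /=; ring.
by rewrite mulrA mulVf // mul1r.
Qed.
End Ytrick2.

Lemma condP (m n v k l q : nat) (P : algC -> Prop) (y eps : algC) (sigma : int) (eta : algC) (z : nat) :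
  prime q -> prime_ideal m P -> P q%:R -> KeyP m P ->
  (forall p, P p -> exists o, inO m o /\ p * y = q%:R * o) ->
  inO m y -> ~ P y -> ordK m P eps 0 -> (0 < k)%N -> (0 < l)%N -> q = (2 * k * l).+1 ->
  inK m eta -> v%:R * sigma%:~R ^+ l + n%:R * sqm m = eps * eta ^+ l ->
  (q%:Z %| z%:Z - sigma ^+ l)%Z -> condC m n v k eps P z.
Proof.
move=> pq hP qP key HPQ hyO ny heps hk hl hq hK heq hz.
have [al [be [hal hbe nal nbe epsE]]] := eps_unit pq hP qP key HPQ hyO ny heps.
set Z := v%:R * sigma%:~R ^+ l + n%:R * sqm m in heq.
have hZ : inO m Z.
  apply: inO_add; apply: inO_mul; try exact: inO_nat; try exact: inO_s.
  by apply: inO_exp; exact: inO_int.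
have alnz : al != 0 by apply: (notP_nz hP).
have benz : be != 0 by apply: (notP_nz hP).
have eqZ : Z * be = al * eta ^+ l by rewrite heq epsE; field.
have [e1 [u2 [he1 hu2 nu2 etaE]]] := eta_int pq hP qP HPQ hyO ny hl hZ hal nal hbe eqZ hK.
have u2nz : u2 != 0 by apply: (notP_nz hP).
case/dvdzP: hz => t ht.
set X := v%:R * z%:R + n%:R * sqm m.
have hX : X = Z + (v%:Z * t)%:~R * q%:R.
  have : (z%:Z - sigma ^+ l)%:~R = (t * q%:Z)%:~R :> algC by rewrite ht.
  rewrite rmorphB rmorphM rmorphXn /= => e.
  have ez : (z%:R : algC) = sigma%:~R ^+ l + t%:~R * q%:R.
    by rewrite -e; rewrite -[(z%:Z)%:~R]/(z%:R : algC); ring.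
  by rewrite /X /Z ez rmorphM /=; ring.
set W := X * be.
have hXO : inO m X.
  by rewrite hX; apply: inO_add => //; apply: inO_mul; [exact: inO_int | exact: inO_nat].
have hW : inO m W by apply: inO_mul.
have xE : (X / eps) ^+ (2 * k) = W ^+ (2 * k) / al ^+ (2 * k).
  by rewrite epsE -expr_div_n /W; congr (_ ^+ _); rewrite invf_div mulrA.
rewrite /condC; cbv zeta; rewrite -/X xE.
have hal2 : inO m (al ^+ (2 * k)) by apply: inO_exp.
have nal2 : ~ P (al ^+ (2 * k)) by move/(P_exp_prime hP hal).
have al2nz : al ^+ (2 * k) != 0 by apply: (notP_nz hP).
have k2 : (2 * k = (2 * k).-1.+1)%N by rewrite prednK // muln_gt0.
case: (classic (P W)) => PW.
  left; exists (W ^+ (2 * k)), (al ^+ (2 * k)); split => //; last by rewrite subr0.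
  by rewrite k2 exprSr; apply: (P_mulO hP) => //; exact: inO_exp.
right; exists (W ^+ (2 * k) - al ^+ (2 * k)), (al ^+ (2 * k)); split => //; last first.
  by rewrite mulrBl divff.
have hu2l : inO m (u2 ^+ l) by apply: inO_exp.
have he1l : inO m (e1 ^+ l) by apply: inO_exp.
have hWu : P (W * u2 ^+ l - al * e1 ^+ l).
  have -> : W * u2 ^+ l - al * e1 ^+ l = (v%:Z * t)%:~R * q%:R * (be * u2 ^+ l).
    have e2 : Z * be * u2 ^+ l = al * e1 ^+ l.
      by rewrite eqZ etaE expr_div_n -mulrA divfK // expf_neq0.
    by rewrite -e2 /W hX; ring.
  by apply: (P_qmul hP qP); apply: inO_mul.
have nWu : ~ P (W * u2 ^+ l).
  by apply: (P_notmul hP) => //; move/(P_exp_prime hP hu2).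
have ne1 : ~ P e1.
  move=> Pe1; apply: nWu.
  have Pa : P (al * e1 ^+ l).
    apply: (P_mulO hP) => //; rewrite -(prednK hl) exprSr.
    by apply: (P_mulO hP) => //; exact: inO_exp.
  by have := P_add hP hWu Pa; rewrite subrK.
have F1 := P_fermat pq hP qP key hu2 nu2.
have F2 := P_fermat pq hP qP key he1 ne1.
have C := P_cong_exp hP (2 * k) (inO_mul hW hu2l) (inO_mul hal he1l) hWu.
have hq1 : q.-1 = (l * (2 * k))%N by rewrite hq /= mulnC.
have -> : W ^+ (2 * k) - al ^+ (2 * k) =
   ((W * u2 ^+ l) ^+ (2 * k) - (al * e1 ^+ l) ^+ (2 * k))
   - W ^+ (2 * k) * (u2 ^+ q.-1 - 1) + al ^+ (2 * k) * (e1 ^+ q.-1 - 1).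
  by rewrite hq1 !exprMn -!exprM; ring.
apply: (P_add hP); last by apply: (P_mulO hP).
apply: (P_sub hP) => //; apply: (P_mulO hP) => //; exact: inO_exp.
Qed.

Lemma idealMul_in (m : nat) (I J : algC -> Prop) z :
  prime_ideal m I -> prime_ideal m J -> idealMul I J z -> I z /\ J z.
Proof.
move=> hI hJ [sq [hs ->]]; elim: sq hs => [|p sq IH] hs.
  by rewrite big_nil; split; [exact: (P_0 hI) | exact: (P_0 hJ)].
have [h1 h2] := hs p (mem_head _ _).
have [i1 i2] : I (\sum_(p0 <- sq) p0.1 * p0.2) /\ J (\sum_(p0 <- sq) p0.1 * p0.2).
  by apply: IH => p0 hp0; apply: hs; rewrite in_cons hp0 orbT.
rewrite big_cons; split; [apply: (P_add hI) | apply: (P_add hJ)] => //.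
  by apply: (P_mulOr hI) => //; exact: (P_O hJ).
by apply: (P_mulO hJ) => //; exact: (P_O hI).
Qed.

Lemma idealMul_q (m q : nat) (I J : algC -> Prop) z :
  prime_ideal m J -> (forall b, I b -> exists c, inO m c /\ b = q%:R * c) ->
  idealMul I J z -> exists w, J w /\ z = q%:R * w.
Proof.
move=> hJ Isub [sq [hs ->]]; elim: sq hs => [|p sq IH] hs.
  by exists 0; rewrite big_nil mulr0; split => //; exact: (P_0 hJ).
have [h1 h2] := hs p (mem_head _ _).
have [w [hw ew]] : exists w, J w /\ (\sum_(p0 <- sq) p0.1 * p0.2) = q%:R * w.
  by apply: IH => p0 hp0; apply: hs; rewrite in_cons hp0 orbT.
have [c [hc ec]] := Isub _ h1.
exists (c * p.2 + w); split.
  by apply: (P_add hJ) => //; apply: (P_mulO hJ).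
by rewrite big_cons ew ec; ring.
Qed.

Unset Implicit Arguments.

Theorem lemma9p2 (l R S T v m n q k : nat) (eps : algC) (q1 q2 : algC -> Prop) :
  prime l ->
  (0 < R)%N -> (0 < S)%N -> (0 < T)%N ->
  coprime R S -> coprime S T -> coprime R T ->
  (0 < v)%N -> (S * Sprime S = v ^ 2)%N ->
  squarefree m -> (0 < m)%N -> (0 < n)%N -> (T * Sprime S = m * n ^ 2)%N ->
  in_E l m n (R * Sprime S) eps ->
  (0 < k)%N -> q = (2 * k * l).+1 -> prime q ->
  prime_ideal m q1 -> prime_ideal m q2 -> q1 <> q2 ->
  (forall x, principal m q%:R x <-> idealMul q1 q2 x) ->
  ordK m q1 eps 0 -> ordK m q2 eps 0 ->
  (forall zeta : 'F_q, (exists eta : 'F_q, zeta = eta ^+ l) ->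
     ~ (condC m n v k eps q1 zeta /\ condC m n v k eps q2 zeta)) ->
  ~ exists (sigma : int) (eta : algC),
      inK m eta /\
      v%:R * (sigma%:~R) ^+ l + n%:R * sqm m = eps * eta ^+ l.
Proof.
move=> pl _ _ _ _ _ _ _ _ sqf hm _ _ _ hk hq pq hq1 hq2 q12 hprin ord1 ord2 HC.
case=> sigma [eta [hK heq]].
have hl : (0 < l)%N := prime_gt0 pl.
have qg2 : (2 < q)%N by rewrite hq; nia.
have qmem : idealMul q1 q2 q%:R.
  by apply/hprin; exists 1; split; [exact: (inO_nat m 1) | rewrite mulr1].
have [qP1 qP2] := idealMul_in hq1 hq2 qmem.
case: (classic (exists r : int, (q%:Z %| r * r + m%:Z)%Z)) => [[r hr]|nr]; last first.
  have [w [hw ew]] := idealMul_q hq2 (no_r_sub pq qg2 sqf hm hq1 qP1 nr) qmem.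
  apply: (P_not1 hq2).
  have -> : (1 : algC) = w by apply: (mulfI (qnz pq)); rewrite -ew mulr1.
  exact: hw.
have key1 := Key_from_r pq qg2 sqf hm hq1 qP1 hr.
have key2 := Key_from_r pq qg2 sqf hm hq2 qP2 hr.
have ex2 : exists y, q2 y /\ ~ q1 y.
  apply: NNPP => nex.
  have sub21 : forall x, q2 x -> q1 x.
    by move=> x hx; apply: NNPP => nx; apply: nex; exists x.
  have sub12 := P_max pq hq2 qP2 key2 hq1 sub21.
  apply: q12; apply: functional_extensionality => x.
  by apply: propositional_extensionality; split; [exact: sub12 | exact: sub21].
have ex1 : exists y, q1 y /\ ~ q2 y.
  apply: NNPP => nex.
  have sub12 : forall x, q1 x -> q2 x.
    by move=> x hx; apply: NNPP => nx; apply: nex; exists x.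
  have sub21 := P_max pq hq1 qP1 key1 hq2 sub12.
  apply: q12; apply: functional_extensionality => x.
  by apply: propositional_extensionality; split; [exact: sub12 | exact: sub21].
case: ex2 => y2 [hy2 ny2]; case: ex1 => y1 [hy1 ny1].
have HPQ1 : forall p, q1 p -> exists o, inO m o /\ p * y2 = q%:R * o.
  move=> p hp; have : idealMul q1 q2 (p * y2).
    exists [:: (p, y2)]; split; last by rewrite big_cons big_nil addr0.
    by move=> p'; rewrite inE => /eqP -> /=.
  by case/hprin => o [ho eo]; exists o.
have HPQ2 : forall p, q2 p -> exists o, inO m o /\ p * y1 = q%:R * o.
  move=> p hp; have : idealMul q1 q2 (y1 * p).
    exists [:: (y1, p)]; split; last by rewrite big_cons big_nil addr0.
    by move=> p'; rewrite inE => /eqP -> /=.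
  by case/hprin => o [ho eo]; exists o; rewrite mulrC.
pose zeta : 'F_q := (sigma%:~R : 'F_q) ^+ l.
have hz : (q%:Z %| (zeta : nat)%:Z - sigma ^+ l)%Z.
  rewrite -Fq0 // rmorphB rmorphXn /= -pmulrn natr_Zp.
  by rewrite subrr.
apply: (HC zeta); first by exists (sigma%:~R).
split.
  exact: (condP pq hq1 qP1 key1 HPQ1 (P_O hq2 hy2) ny2 ord1 hk hl hq hK heq hz).
exact: (condP pq hq2 qP2 key2 HPQ2 (P_O hq1 hy1) ny1 ord2 hk hl hq hK heq hz).
Qed.
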